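(* Let $L_0+\lambda L_1\in\mathbb{C}[\lambda]^{m\times n}$ be a matrix pencil. Suppose $U\in\mathbb{C}^{m\times m}$, $V\in\mathbb{C}^{n\times n}$ are unitary and \[ U^*(L_0+\lambda L_1)V=\begin{bmatrix}\tilde A & X\\ 0 & A_r\end{bmatrix}+\lambda\begin{bmatrix}\tilde E & Y\\ 0 & E_r\end{bmatrix}, \] where $A_r$ has full column rank and $\tilde A+\lambda\tilde E$ is block upper triangular with block rows of sizes $s_1,\dots,s_k$ and block columns of sizes $t_1,\dots,t_k$ (blocks $A_{i,j},E_{i,j}\in\mathbb{C}^{s_i\times t_j}$), with zero block-diagonal blocks in $\tilde A$, each $E_{i,i}$ of full row rank $s_i$ and each $A_{i,i+1}$ of full column rank $t_{i+1}$. Let $U_d$ and $V_d$ be unitary block-diagonal matrices, conformal with this block structure (and equal to the identity on the rows/columns outside $\tilde A+\lambda\tilde E$), such that, with $\hat U=UU_d$ and $\hat V=VV_d$ in place of $U,V$, the stairs take the form $A_{i,i+1}=\begin{bmatrix}\hat A_{i,i+1}\\0\end{bmatrix}$, $E_{i,i}=\begin{bmatrix}0&\hat E_{i,i}\end{bmatrix}$ with $\hat A_{i,i+1},\hat E_{i,i}$ square, upper triangular and invertible. Let $S$ and $T$ be unit upper triangular matrices bidiagonalizing the resulting leading subpencil $\tilde A+\lambda\tilde E$ (i.e. eliminating all blocks except the $E_{i,i}$ and $A_{i,i+1}$), extended by identity blocks to size $m\times m$ and $n\times n$. Define $\hat S:=UU_dS$ and $\hat T:=VV_dT$, $\sigma_i:=\sum_{j=1}^i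 s_j$, $\tau_i:=\sum_{j=1}^i t_j$. Define the Wong sequences $\mathcal{U}_0=\{0\}\subseteq\mathbb{C}^m$ and, for $i=1,\dots,k$, $\mathcal{V}_i=L_0^{\leftarrow}\mathcal{U}_{i-1}\subseteq\mathbb{C}^n$ and $\mathcal{U}_i=L_1\mathcal{V}_i\subseteq\mathbb{C}^m$. Then for $i=1,\dots,k$, \[ \mathcal{U}_i=\operatorname{im}\hat S\begin{bmatrix}I_{\sigma_i}\\0\end{bmatrix},\qquad \mathcal{V}_i=\operatorname{im}\hat T\begin{bmatrix}I_{\tau_i}\\0\end{bmatrix}, \] i.e. the (in general non-orthonormal) leading block columns of $\hat S$ and $\hat T$ span the nested Wong spaces.
   Context: For a matrix $M$ and subspaces $\mathcal{V},\mathcal{U}$: $M\mathcal{V}:=\{Mv: v\in\mathcal{V}\}$ is the image and $M^{\leftarrow}\mathcal{U}:=\{v: Mv\in\mathcal{U}\}$ is the preimage. A unit upper triangular matrix is upper triangular with ones on the diagonal. It is known (and used here) that for such a staircase form the Wong spaces satisfy $\mathcal{U}_i=\operatorname{im}U\begin{bmatrix}I_{\sigma_i}\\0\end{bmatrix}$ and $\mathcal{V}_i=\operatorname{im}V\begin{bmatrix}I_{\tau_i}\\0\end{bmatrix}$. *)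

(* Defs.v *)
From HB Require Import structures.
From mathcomp Require Import all_boot all_order all_algebra.
Set Implicit Arguments. Unset Strict Implicit. Unset Printing Implicit Defensive.
Import Order.TTheory GRing.Theory Num.Theory.
Local Open Scope ring_scope.

Definition ctrmx (C : numClosedFieldType) m n (A : 'M[C]_(m, n)) : 'M[C]_(n, m) :=
  (map_mx Num.conj A)^T.

Definition unitary (C : numClosedFieldType) n (A : 'M[C]_n) : Prop :=
  ctrmx A *m A = 1%:M.

Definition upper_tri (R : nzRingType) n (A : 'M[R]_n) : Prop :=
  forall i j : 'I_n, (j < i)%N -> A i j = 0.

Definition unit_upper_tri (R : nzRingType) n (A : 'M[R]_n) : Prop :=
  upper_tri A /\ forall i, A i i = 1.

(* partial sums (0-based): psum s i = s 0 + ... + s (i-1);  the paper's sigma_i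
   (1-based, sigma_i = s_1 + ... + s_i) is psum s i. *)
Definition psum (s : nat -> nat) (i : nat) : nat := (\sum_(j < i) s j)%N.

(* the p x q block of A whose top-left entry is at (r0, c0) (entries outside A read as 0) *)
Definition getblk (R : nzRingType) M N (A : 'M[R]_(M, N)) (r0 c0 p q : nat) : 'M[R]_(p, q) :=
  \matrix_(a < p, b < q)
    match (insub (r0 + a)%N : option 'I_M), (insub (c0 + b)%N : option 'I_N) with
    | Some r, Some c => A r c
    | _, _ => 0
    end.

Definition blkdiag (R : nzRingType) (s : nat -> nat) (k : nat) (A : 'M[R]_(psum s k)) : Prop :=
  forall i j, (i < k)%N -> (j < k)%N -> i != j ->
    getblk A (psum s i) (psum s j) (s i) (s j) = 0.

Definition img (R : nzRingType) a b (M : 'M[R]_(a, b)) (P : 'cV[R]_b -> Prop) : 'cV[R]_a -> Prop :=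
  fun x => exists v, P v /\ x = M *m v.
Definition preimg (R : nzRingType) a b (M : 'M[R]_(a, b)) (P : 'cV[R]_a -> Prop) : 'cV[R]_b -> Prop :=
  fun v => P (M *m v).
Definition im (R : nzRingType) a b (M : 'M[R]_(a, b)) : 'cV[R]_a -> Prop :=
  img M (fun _ => True).

Fixpoint wongU (R : nzRingType) m n (L0 L1 : 'M[R]_(m, n)) (i : nat) : 'cV[R]_m -> Prop :=
  match i with
  | 0 => fun x => x = 0
  | i'.+1 => img L1 (preimg L0 (wongU L0 L1 i'))
  end.
Definition wongV (R : nzRingType) m n (L0 L1 : 'M[R]_(m, n)) (i : nat) : 'cV[R]_n -> Prop :=
  preimg L0 (wongU L0 L1 i.-1).
Arguments blkdiag {R} s k A.

(* Main.v *)
Require Import Defs.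
From HB Require Import structures.
From mathcomp Require Import all_boot all_order all_algebra.
Set Implicit Arguments. Unset Strict Implicit. Unset Printing Implicit Defensive.
Import Order.TTheory GRing.Theory Num.Theory.
Local Open Scope ring_scope.

Section Basic.
Variable F : fieldType.

Definition supp N r (y : 'cV[F]_N) : Prop := forall a : 'I_N, (r <= a)%N -> y a 0 = 0.

Lemma psumS (s : nat -> nat) i : psum s i.+1 = (psum s i + s i)%N.
Proof. by rewrite /psum big_ord_recr. Qed.

Lemma psum_mono (s : nat -> nat) i j : (i <= j)%N -> (psum s i <= psum s j)%N.
Proof.
move=> /subnKC <-; elim: (j - i)%N => [|d IH]; first by rewrite addn0.
by rewrite addnS psumS (leq_trans IH) // leq_addr.
Qed.

Lemma psum_lt (s : nat -> nat) i j : (psum s i < psum s j)%N -> (i < j)%N.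
Proof.
rewrite ltnNge => H; rewrite ltnNge; apply/negP => /(psum_mono s) H'.
by rewrite H' in H.
Qed.

Lemma locate (s : nat -> nat) k a : (a < psum s k)%N ->
  exists i, (i < k)%N /\ (psum s i <= a < psum s i.+1)%N.
Proof.
elim: k => [|k IH]; first by rewrite /psum big_ord0.
case: (ltnP a (psum s k)) => h1 h2.
  by case: (IH h1) => i [h3 h4]; exists i; split => //; apply: ltnW.
by exists k; rewrite h1 h2.
Qed.

Lemma getblkE M N (A : 'M[F]_(M,N)) r0 c0 p q (a : 'I_p) (b : 'I_q)
  (ha : (r0 + a < M)%N) (hb : (c0 + b < N)%N) :
  getblk A r0 c0 p q a b = A (Ordinal ha) (Ordinal hb).
Proof. by rewrite mxE (insubT (fun x => x < M)%N ha) (insubT (fun x => x < N)%N hb). Qed.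

Lemma getblk_at M N (A : 'M[F]_(M,N)) r0 c0 p q (a : 'I_M) (b : 'I_N)
  (ha : (a - r0 < p)%N) (hb : (b - c0 < q)%N) : (r0 <= a)%N -> (c0 <= b)%N ->
  A a b = getblk A r0 c0 p q (Ordinal ha) (Ordinal hb).
Proof.
move=> h1 h2; rewrite mxE /= (subnKC h1) (subnKC h2) !valK //.
Qed.

Lemma getblk_at0 M N (A : 'M[F]_(M,N)) r0 c0 p q (a : 'I_M) (b : 'I_N) :
  getblk A r0 c0 p q = 0 -> (r0 <= a < r0 + p)%N -> (c0 <= b < c0 + q)%N -> A a b = 0.
Proof.
move=> H /andP[h1 h2] /andP[h3 h4].
have ha : (a - r0 < p)%N by rewrite ltn_subLR.
have hb : (b - c0 < q)%N by rewrite ltn_subLR.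
by rewrite (getblk_at A ha hb) // H mxE.
Qed.

Lemma getblk_ul M1 M2 N1 N2 (A : 'M[F]_(M1 + M2, N1 + N2)) r0 c0 p q :
  (r0 + p <= M1)%N -> (c0 + q <= N1)%N ->
  getblk (ulsubmx A) r0 c0 p q = getblk A r0 c0 p q.
Proof.
move=> h1 h2; apply/matrixP => a b.
have ha : (r0 + a < M1)%N by apply: leq_trans h1; rewrite ltn_add2l.
have hb : (c0 + b < N1)%N by apply: leq_trans h2; rewrite ltn_add2l.
rewrite (getblkE _ ha hb) (getblkE _ (ltn_addr M2 ha) (ltn_addr N2 hb)).
by rewrite !mxE; congr (A _ _); apply: val_inj.
Qed.

Lemma getblk_dr M1 M2 N1 N2 (A : 'M[F]_(M1 + M2, N1 + N2)) :
  getblk A M1 N1 M2 N2 = drsubmx A.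
Proof.
apply/matrixP => a b.
have ha : (M1 + a < M1 + M2)%N by rewrite ltn_add2l.
have hb : (N1 + b < N1 + N2)%N by rewrite ltn_add2l.
by rewrite (getblkE _ ha hb) !mxE; congr (A _ _); apply: val_inj.
Qed.

Lemma ul_entry M1 M2 N1 N2 (A : 'M[F]_(M1 + M2, N1 + N2)) i j :
  ulsubmx A i j = A (lshift _ i) (lshift _ j).
Proof. by rewrite !mxE. Qed.


Lemma getblk_mul M N (A : 'M[F]_(M,N)) (w : 'cV[F]_N) r0 c0 p q :
  (r0 + p <= M)%N -> (c0 + q <= N)%N ->
  (forall (a : 'I_M) (b : 'I_N), (r0 <= a < r0 + p)%N -> ~~ (c0 <= b < c0 + q)%N ->
     A a b * w b 0 = 0) ->
  getblk (A *m w) r0 0 p 1 = getblk A r0 c0 p q *m getblk w c0 0 q 1.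
Proof.
move=> hM hN H; apply/matrixP => a z; rewrite ord1.
have ha : (r0 + a < M)%N by apply: leq_trans hM; rewrite ltn_add2l.
have h0 : (0 + nat_of_ord (@ord0 0) < 1)%N by [].
rewrite (getblkE _ ha h0) !mxE.
pose g := fun b : nat => match insub b : option 'I_N with
   Some o => A (Ordinal ha) o * w o 0 | None => 0 end.
have gE : forall b (hb : (b < N)%N), g b = A (Ordinal ha) (Ordinal hb) * w (Ordinal hb) 0.
  by move=> b hb; rewrite /g (insubT (fun x => x < N)%N hb).
transitivity (\sum_(0 <= b < N) g b).
  rewrite big_mkord; apply: eq_bigr => b _; rewrite /g valK.
  by congr (_ * w _ _); apply: val_inj.
have hc0 : (c0 <= N)%N by apply: leq_trans hN; apply: leq_addr.
rewrite (@big_cat_nat _ _ _ c0) //= (@big_cat_nat _ _ _ (c0 + q) c0) //= ?leq_addr //.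
have Z : forall b, (b < N)%N -> ~~ (c0 <= b < c0 + q)%N -> g b = 0.
  move=> b hb nb; rewrite (gE _ hb); apply: H => //.
  by rewrite leq_addr /= ltn_add2l.
have Z1 : \sum_(0 <= b < c0) g b = 0.
  rewrite big_nat_cond big1 // => b /andP[/andP[_ hb] _]; apply: Z.
    by apply: leq_trans hc0.
  by rewrite leqNgt hb.
have Z2 : \sum_(c0 + q <= b < N) g b = 0.
  rewrite big_nat_cond big1 // => b /andP[/andP[hb1 hb2] _]; apply: Z => //.
  by rewrite ltnNge hb1 andbF.
rewrite Z1 Z2 add0r addr0.
rewrite -{1}(add0n c0) big_addn addKn big_mkord; apply: eq_bigr => b _.
have hb : (c0 + b < N)%N by apply: leq_trans hN; rewrite ltn_add2l.
have hb' : (b + c0 < N)%N by rewrite addnC.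
rewrite (gE _ hb') (getblkE _ ha hb) (getblkE _ hb h0).
by congr (A _ _ * w _ _); apply: val_inj => //=; rewrite addnC.
Qed.

Definition putv N c0 q (z : 'cV[F]_q) : 'cV[F]_N :=
  \matrix_(b < N, j < 1)
    if (c0 <= b)%N then (match insub (b - c0)%N : option 'I_q with Some o => z o 0 | None => 0 end)
    else 0.

Lemma putv_out N c0 q (z : 'cV[F]_q) (b : 'I_N) :
  ~~ (c0 <= b < c0 + q)%N -> putv N c0 z b 0 = 0.
Proof.
rewrite mxE; case: ifP => // h1 /=; rewrite -ltn_subLR // => h2.
by case: insubP => // o; rewrite (negbTE h2).
Qed.

Lemma putv_blk N c0 q (z : 'cV[F]_q) : (c0 + q <= N)%N ->
  getblk (putv N c0 z) c0 0 q 1 = z.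
Proof.
move=> hN; apply/matrixP => b j; rewrite ord1.
have hb : (c0 + b < N)%N by apply: leq_trans hN; rewrite ltn_add2l.
have h0 : (0 + nat_of_ord (@ord0 0) < 1)%N by [].
rewrite (getblkE _ hb h0) mxE /= leq_addr addKn valK.
by congr (z _ _); apply: val_inj.
Qed.


Lemma getblk0 M N (A : 'M[F]_(M,N)) r0 c0 p q :
  (forall (a : 'I_M) (b : 'I_N), (r0 <= a < r0 + p)%N -> (c0 <= b < c0 + q)%N -> A a b = 0) ->
  getblk A r0 c0 p q = 0.
Proof.
move=> H; apply/matrixP => a b; rewrite !mxE.
case: insubP => // a' _ ea; case: insubP => // b' _ eb; apply: H.
  by rewrite ea leq_addr ltn_add2l ltn_ord.
by rewrite eb leq_addr ltn_add2l ltn_ord.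
Qed.

End Basic.

Section Wong.
Variables (F : fieldType) (k p q : nat) (s t : nat -> nat).
Variables (M0 M1 : 'M[F]_(psum s k + p, psum t k + q)).
Hypothesis HD : forall (a : 'I_(psum s k + p)) (b : 'I_(psum t k + q)),
  (psum s k <= a)%N -> (b < psum t k)%N -> M0 a b = 0 /\ M1 a b = 0.
Hypothesis HE0 : forall i j (a : 'I_(psum s k + p)) (b : 'I_(psum t k + q)),
  (j <= i)%N -> (i < k)%N -> (psum s i <= a < psum s i.+1)%N ->
  (psum t j <= b < psum t j.+1)%N -> M0 a b = 0.
Hypothesis HE1 : forall i j (a : 'I_(psum s k + p)) (b : 'I_(psum t k + q)),
  (j < i)%N -> (i < k)%N -> (psum s i <= a < psum s i.+1)%N ->
  (psum t j <= b < psum t j.+1)%N -> M1 a b = 0.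
Hypothesis HRT : forall z : 'cV[F]_q,
  getblk M0 (psum s k) (psum t k) p q *m z = 0 -> z = 0.
Hypothesis HR0 : forall i (z : 'cV[F]_(t i.+1)), (i.+1 < k)%N ->
  getblk M0 (psum s i) (psum t i.+1) (s i) (t i.+1) *m z = 0 -> z = 0.
Hypothesis HR1 : forall l (y : 'cV[F]_(s l)), (l < k)%N ->
  exists z, getblk M1 (psum s l) (psum t l) (s l) (t l) *m z = y.

Lemma step1_sub j w : (j < k)%N -> supp (psum t j.+1) w -> supp (psum s j) (M0 *m w).
Proof.
move=> hj hw a ha; rewrite mxE big1 // => b _.
case: (leqP (psum t j.+1) b) => hb; first by rewrite hw // mulr0.
have hbk : (b < psum t k)%N := leq_trans hb (psum_mono t hj).
case: (leqP (psum s k) a) => hak; first by rewrite (HD hak hbk).1 mul0r.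
case: (locate hak) => i [hi hai]; case: (locate hbk) => j' [hj' hbj'].
have hle : (j' <= i)%N.
  have h1 : (j' < j.+1)%N.
    by apply: (@psum_lt t); case/andP: hbj' => h2 _; apply: leq_ltn_trans h2 hb.
  have h2 : (j < i.+1)%N.
    by apply: (@psum_lt s); case/andP: hai => _ h3; apply: leq_ltn_trans ha h3.
  by rewrite -ltnS (leq_trans h1 h2).
by rewrite (HE0 hle hi hai hbj') mul0r.
Qed.

Lemma step1_sup j w : (j < k)%N -> supp (psum s j) (M0 *m w) -> supp (psum t j.+1) w.
Proof.
move=> hj hM.
have base : supp (psum t k) w.
  have h := @getblk_mul F _ _ M0 w (psum s k) (psum t k) p q (leqnn _) (leqnn _).
  have z0 : getblk (M0 *m w) (psum s k) 0 p 1 = 0.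
    apply: getblk0 => a b /andP[ha _] _; rewrite (ord1 b); apply: hM.
    by apply: leq_trans ha; apply: psum_mono; apply: ltnW.
  rewrite z0 in h.
  have hc : forall (a : 'I_(psum s k + p)) (b : 'I_(psum t k + q)),
     (psum s k <= a < psum s k + p)%N ->
     ~~ (psum t k <= b < psum t k + q)%N -> M0 a b * w b 0 = 0.
    move=> a b /andP[ha _] nb; rewrite (HD ha _).1 ?mul0r //.
    by move: nb; rewrite ltn_ord andbT -ltnNge.
  have hz := HRT (esym (h hc)).
  move=> b hb; apply: (getblk_at0 hz); first by rewrite hb ltn_ord.
  by [].
have aux : forall i, (j <= i)%N -> (i.+1 < k)%N -> supp (psum t i.+2) w ->
    supp (psum t i.+1) w.
  move=> i hji hik hw.
  have bnd1 : (psum s i + s i <= psum s k + p)%N.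
    by rewrite -psumS (leq_trans (psum_mono s (ltnW hik))) // leq_addr.
  have bnd2 : (psum t i.+1 + t i.+1 <= psum t k + q)%N.
    by rewrite -psumS (leq_trans (psum_mono t hik)) // leq_addr.
  have h := @getblk_mul F _ _ M0 w _ _ _ _ bnd1 bnd2.
  have z0 : getblk (M0 *m w) (psum s i) 0 (s i) 1 = 0.
    apply: getblk0 => a b /andP[ha _] _; rewrite (ord1 b); apply: hM.
    by apply: leq_trans ha; apply: psum_mono.
  rewrite z0 in h.
  have hc : forall (a : 'I_(psum s k + p)) (b : 'I_(psum t k + q)),
     (psum s i <= a < psum s i + s i)%N ->
     ~~ (psum t i.+1 <= b < psum t i.+1 + t i.+1)%N -> M0 a b * w b 0 = 0.
    move=> a b /andP[ha1 ha2]; rewrite negb_and -ltnNge -leqNgt => /orP[] nb; last first.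
      by rewrite hw ?mulr0 // psumS.
    have hbk : (b < psum t k)%N.
      by apply: leq_trans nb _; apply: psum_mono; apply: ltnW.
    case: (locate hbk) => j' [hj' hbj'].
    have hle : (j' <= i)%N.
      by rewrite -ltnS; apply: (@psum_lt t); case/andP: hbj' => h2 _; apply: leq_ltn_trans h2 nb.
    by rewrite (HE0 hle (ltnW hik) _ hbj') ?mul0r // ha1 psumS.
  have hz := HR0 hik (esym (h hc)).
  move=> b hb; case: (leqP (psum t i.+2) b) => hb2; first by rewrite hw.
  apply: (getblk_at0 hz); last by [].
  by rewrite hb -psumS.
have main : forall d l, (k - l)%N = d -> (j.+1 <= l <= k)%N -> supp (psum t l) w.
  elim=> [|d IH] l hd /andP[h1 h2].
    have -> : l = k by apply/eqP; rewrite eqn_leq h2 -subn_eq0 hd.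
    exact: base.
  have hlk : (l < k)%N by rewrite -subn_gt0 hd.
  have hw : supp (psum t l.+1) w.
    by apply: IH; [rewrite subnS hd | rewrite hlk leqW].
  have el : l = l.-1.+1 by rewrite prednK // (leq_trans _ h1).
  rewrite el; apply: aux; rewrite -?el //.
  by rewrite -ltnS -el.
by apply: (main (k - j.+1)%N); rewrite // leqnn hj.
Qed.


Lemma step2_sub j w : (j < k)%N -> supp (psum t j.+1) w -> supp (psum s j.+1) (M1 *m w).
Proof.
move=> hj hw a ha; rewrite mxE big1 // => b _.
case: (leqP (psum t j.+1) b) => hb; first by rewrite hw // mulr0.
have hbk : (b < psum t k)%N := leq_trans hb (psum_mono t hj).
case: (leqP (psum s k) a) => hak; first by rewrite (HD hak hbk).2 mul0r.
case: (locate hak) => i [hi hai]; case: (locate hbk) => j' [hj' hbj'].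
have hle : (j' < i)%N.
  have h1 : (j' < j.+1)%N.
    by apply: (@psum_lt t); case/andP: hbj' => h2 _; apply: leq_ltn_trans h2 hb.
  have h2 : (j.+1 < i.+1)%N.
    by apply: (@psum_lt s); case/andP: hai => _ h3; apply: leq_ltn_trans ha h3.
  by apply: leq_trans h1 _; rewrite -ltnS.
by rewrite (HE1 hle hi hai hbj') mul0r.
Qed.

Lemma step2_sup j y : (j < k)%N -> supp (psum s j.+1) y ->
  exists w, supp (psum t j.+1) w /\ y = M1 *m w.
Proof.
move=> hj hy.
have Q : forall d l, (j.+1 - l)%N = d -> (l <= j.+1)%N ->
    exists w, supp (psum t j.+1) w /\ supp (psum s l) (y - M1 *m w).
  elim=> [|d IH] l hd hl.
    have -> : l = j.+1 by apply/eqP; rewrite eqn_leq hl -subn_eq0 hd.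
    exists 0; split; first by move=> b _; rewrite mxE.
    by rewrite mulmx0 subr0.
  have hlj : (l < j.+1)%N by rewrite -subn_gt0 hd.
  case: (IH l.+1 _ hlj) => [|w [hw hr]]; first by rewrite subnS hd.
  have hlk : (l < k)%N := leq_trans hlj hj.
  case: (HR1 (getblk (y - M1 *m w) (psum s l) 0 (s l) 1) hlk) => z hz.
  pose u := putv (psum t k + q) (psum t l) z.
  exists (w + u); split.
    move=> b hb; rewrite mxE hw // add0r putv_out //.
    rewrite -psumS negb_and -!leqNgt; apply/orP; right.
    by apply: leq_trans hb; apply: psum_mono.
  have bnd1 : (psum s l + s l <= psum s k + p)%N.
    by rewrite -psumS (leq_trans (psum_mono s hlk)) // leq_addr.
  have bnd2 : (psum t l + t l <= psum t k + q)%N.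
    by rewrite -psumS (leq_trans (psum_mono t hlk)) // leq_addr.
  have hc : forall (a : 'I_(psum s k + p)) (b : 'I_(psum t k + q)),
     (psum s l <= a < psum s l + s l)%N ->
     ~~ (psum t l <= b < psum t l + t l)%N -> M1 a b * u b 0 = 0.
    by move=> a b _ nb; rewrite putv_out // mulr0.
  have hMu := @getblk_mul F _ _ M1 u _ _ _ _ bnd1 bnd2 hc.
  rewrite putv_blk // hz in hMu.
  have E : y - M1 *m (w + u) = (y - M1 *m w) - M1 *m u.
    by rewrite mulmxDr opprD addrA.
  rewrite E; move=> a ha.
  have E2 : forall (A B : 'cV[F]_(psum s k + p)), (A - B) a 0 = A a 0 - B a 0.
    by move=> A B; rewrite !mxE.
  rewrite E2.
  case: (leqP (psum s l.+1) a) => ha2.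
    rewrite hr // [X in _ - X]mxE big1 ?subr0 // => b _.
    case: (boolP (psum t l <= b < psum t l + t l)%N) => hb; last first.
      by rewrite putv_out // mulr0.
    have hbk : (b < psum t k)%N.
      case/andP: hb => _ hb; apply: leq_trans hb _; rewrite -psumS.
      exact: psum_mono.
    case: (leqP (psum s k) a) => hak; first by rewrite (HD hak hbk).2 mul0r.
    case: (locate hak) => i [hi hai].
    have hli : (l < i)%N.
      rewrite -ltnS; apply: (@psum_lt s); case/andP: hai => _ h3.
      by apply: leq_ltn_trans ha2 h3.
    by rewrite (HE1 hli hi hai _) ?mul0r // psumS.
  have hsa : (a - psum s l < s l)%N by rewrite ltn_subLR // -psumS.
  have h01 : (nat_of_ord (@ord0 0) - 0 < 1)%N by [].
  rewrite (getblk_at (y - M1 *m w) hsa h01 ha (leq0n _)).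
  rewrite (getblk_at (M1 *m u) hsa h01 ha (leq0n _)) hMu.
  by rewrite subrr.
have [w [hw h0]] := Q (j.+1 - 0)%N 0%N erefl (leq0n _).
exists w; split => //; apply/eqP; rewrite -subr_eq0; apply/eqP/matrixP => a b.
by rewrite (ord1 b) h0 ?mxE // /psum big_ord0.
Qed.

Lemma wong_main j : (j <= k)%N -> forall y, wongU M0 M1 j y <-> supp (psum s j) y.
Proof.
elim: j => [|j IH] hj y /=.
  split => [-> a _|H]; first by rewrite mxE.
  by apply/matrixP => a b; rewrite (ord1 b) H ?mxE // /psum big_ord0.
split.
  case=> v [hv ->]; apply: step2_sub => //; apply: (step1_sup hj).
  by apply/IH => //; apply: ltnW.
move/(step2_sup hj) => [w [hw ->]]; exists w; split => //.
rewrite /preimg; apply/IH; first by apply: ltnW.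
exact: step1_sub.
Qed.

Lemma wongV_main j : (j < k)%N -> forall w, wongV M0 M1 j.+1 w <-> supp (psum t j.+1) w.
Proof.
move=> hj w; rewrite /wongV /preimg /=; split.
  by move/(wong_main (ltnW hj)); apply: step1_sup.
by move=> hw; apply/(wong_main (ltnW hj)); apply: step1_sub.
Qed.

End Wong.

Section Img.
Variable F : fieldType.

Lemma mul_pidE N (A : 'M[F]_N) r a b :
  (A *m pid_mx r) a b = if (b < r)%N then A a b else 0.
Proof.
rewrite mxE (bigD1 b) //= big1 ?addr0 => [|c hc].
  by rewrite mxE eqxx /=; case: ifP; rewrite ?mulr1 ?mulr0.
by rewrite mxE val_eqE (negbTE hc) mulr0.
Qed.

Lemma pid_mulE N M (A : 'M[F]_(N, M)) r a b :
  ((pid_mx r : 'M_N) *m A) a b = if (a < r)%N then A a b else 0.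
Proof.
rewrite mxE (bigD1 a) //= big1 ?addr0 => [|c hc].
  by rewrite mxE eqxx /=; case: ifP; rewrite ?mul1r ?mul0r.
by rewrite mxE val_eqE eq_sym (negbTE hc) mul0r.
Qed.

Lemma supp_pid N r (y : 'cV[F]_N) : supp r y <-> (pid_mx r : 'M_N) *m y = y.
Proof.
split.
  move=> H; apply/matrixP => a b; rewrite (ord1 b) pid_mulE.
  by case: ifP => // /negbT; rewrite -leqNgt => /H ->.
move=> H a ha; rewrite -H pid_mulE; case: ifP => //.
by rewrite ltnNge ha.
Qed.

Lemma presv_im N r (X : 'M[F]_N) : (r <= N)%N -> X \in unitmx ->
  (forall a b : 'I_N, (b < r <= a)%N -> X a b = 0) ->
  forall y, supp r y <-> exists v : 'cV_r, y = X *m (pid_mx r : 'M_(N, r)) *m v.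
Proof.
move=> hr hX H y.
pose W := (pid_mx r : 'M[F]_N).
have XW : X *m W = W *m X *m W.
  apply/matrixP => a b; rewrite !mul_pidE pid_mulE.
  case: ifP => // hb; case: ifP => // /negbT; rewrite -leqNgt => ha.
  by apply: H; rewrite hb ha.
have XWt : W *m X^T = W *m X^T *m W.
  by rewrite -[W]tr_pid_mx -!trmx_mul mulmxA -/W -XW.
have sub1 : (W *m X^T <= W)%MS by rewrite XWt submxMl.
have rk : \rank (W *m X^T) = \rank W.
  by rewrite mxrankMfree // row_free_unit unitmx_tr.
have sub2 : (W <= W *m X^T)%MS by rewrite -(mxrank_leqif_sup sub1).2 rk.
case/submxP: sub2 => D hD.
have hXt : X^T \in unitmx by rewrite unitmx_tr.
have e1 : W *m invmx X^T = D *m W.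
  by rewrite {1}hD -!mulmxA mulmxV // mulmx1.
have e2 : invmx X *m W = W *m D^T.
  apply: trmx_inj; rewrite !trmx_mul trmxK tr_pid_mx -e1 trmx_inv //.
have WW : W *m W = W by rewrite pid_mx_id.
split => [/supp_pid hy|[v ->]]; last apply/supp_pid.
  exists ((pid_mx r : 'M_(r, N)) *m (D^T *m y)).
  rewrite -!mulmxA (mulmxA (pid_mx r)) pid_mx_id // !mulmxA.
  have e2' : invmx X *m pid_mx r = (pid_mx r : 'M_N) *m D^T := e2.
  by rewrite -(mulmxA X) -e2' (mulmxA X) mulmxV // mul1mx hy.
have -> : (pid_mx r : 'M_(N, r)) = W *m pid_mx r by rewrite pid_mx_id.
by rewrite !mulmxA [in RHS]XW.
Qed.

End Img.

Lemma wong_change (R : fieldType) m n (L0 L1 M0 M1 : 'M[R]_(m,n)) (P P' : 'M_m) (Q Q' : 'M_n) :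
  P' *m P = 1%:M -> P *m P' = 1%:M -> Q *m Q' = 1%:M -> Q' *m Q = 1%:M ->
  L0 = P *m M0 *m Q -> L1 = P *m M1 *m Q ->
  forall i x, wongU L0 L1 i x <-> wongU M0 M1 i (P' *m x).
Proof.
move=> hPP hPP' hQ hQ' e0 e1; elim=> [|i IH] x /=.
  split => [->|h]; first by rewrite mulmx0.
  by rewrite -[x]mul1mx -hPP' -mulmxA h mulmx0.
have key : forall (M : 'M_(m, n)) (v : 'cV[R]_n), P' *m (P *m M *m Q *m v) = M *m (Q *m v).
  by move=> M v; rewrite !mulmxA hPP mul1mx.
split.
  case=> v [hv ->]; exists (Q *m v); split; last by rewrite e1 key.
  by rewrite /preimg -key -e0; apply/IH.
case=> w [hw hx]; exists (Q' *m w); split.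
  by rewrite /preimg; apply/IH; rewrite e0 key (mulmxA Q) hQ mul1mx.
by rewrite -[x]mul1mx -hPP' -mulmxA hx e1 !mulmxA -(mulmxA _ Q) hQ mulmx1.
Qed.

Lemma blk_upper (R : nzRingType) n1 n2 (A : 'M[R]_n1) : upper_tri A ->
  forall a b : 'I_(n1 + n2), (b < a)%N -> block_mx A 0 0 (1%:M : 'M_n2) a b = 0.
Proof.
move=> hA a b; case: (split_ordP a) => a' ->; case: (split_ordP b) => b' -> /= hab.
- by rewrite block_mxEul hA.
- by rewrite block_mxEur mxE.
- by rewrite block_mxEdl mxE.
rewrite block_mxEdr mxE; rewrite ltn_add2l in hab.
by rewrite -val_eqE /= gtn_eqF.
Qed.

Lemma blkdiag_pres (R : fieldType) (s : nat -> nat) k p (D : 'M[R]_(psum s k)) i :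
  blkdiag s k D -> (i < k)%N -> forall a b : 'I_(psum s k + p),
  (b < psum s i.+1 <= a)%N -> block_mx D 0 0 (1%:M : 'M_p) a b = 0.
Proof.
move=> hD hi a b; case: (split_ordP a) => a' ->; case: (split_ordP b) => b' -> /= /andP[hb ha].
- have ha' : (a' < psum s k)%N by [].
  have hb' : (b' < psum s k)%N by [].
  rewrite block_mxEul.
  case: (locate ha') => i1 [hi1 hai1]; case: (locate hb') => j1 [hj1 hbj1].
  have h1 : (j1 < i.+1)%N.
    by apply: (@psum_lt s); case/andP: hbj1 => h2 _; apply: leq_ltn_trans h2 hb.
  have h2 : (i.+1 < i1.+1)%N.
    by apply: (@psum_lt s); case/andP: hai1 => _ h3; apply: leq_ltn_trans ha h3.
  have hne : i1 != j1 by rewrite gtn_eqF // (leq_trans h1).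
  by apply: (getblk_at0 (hD _ _ hi1 hj1 hne)); rewrite -psumS.
- by rewrite block_mxEur mxE.
- by rewrite block_mxEdl mxE.
exfalso; move: hb; rewrite ltnNge (leq_trans (psum_mono s hi)) //; apply: leq_addr.
Qed.

Lemma pres_mul (R : nzRingType) N r (X Y : 'M[R]_N) :
  (forall a b : 'I_N, (b < r <= a)%N -> X a b = 0) ->
  (forall a b : 'I_N, (b < a)%N -> Y a b = 0) ->
  forall a b : 'I_N, (b < r <= a)%N -> (X *m Y) a b = 0.
Proof.
move=> hX hY a b /andP[hb ha]; rewrite mxE big1 // => c _.
case: (ltnP c r) => hc; first by rewrite hX ?mul0r // hc.
by rewrite hY ?mulr0 // (leq_trans hb hc).
Qed.

Lemma final_im (C : numClosedFieldType) N r (Uu X : 'M[C]_N) (x : 'cV[C]_N) :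
  ctrmx Uu *m Uu = 1%:M ->
  (exists v : 'cV_r, ctrmx Uu *m x = X *m (pid_mx r : 'M_(N, r)) *m v) <->
  im (Uu *m X *m (pid_mx r : 'M_(N, r))) x.
Proof.
move=> hU; have hU' := mulmx1C hU; split.
  case=> v hv; exists v; split => //.
  by rewrite -[x]mul1mx -hU' -[Uu *m ctrmx Uu *m x]mulmxA hv !mulmxA.
by case=> v [_ ->]; exists v; rewrite !mulmxA hU mul1mx.
Qed.

Lemma unit_blk (C : numClosedFieldType) n1 n2 (D S' : 'M[C]_n1) :
  unitary (block_mx D 0 0 (1%:M : 'M_n2)) -> unit_upper_tri S' ->
  block_mx D 0 0 (1%:M : 'M_n2) *m block_mx S' 0 0 (1%:M : 'M_n2) \in unitmx.
Proof.
move=> hD [hS1 hS2]; rewrite unitmx_mul (mulmx1_unit hD).2 /=.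
rewrite unitmxE det_ublock det1 mulr1 -det_tr det_trig.
  by rewrite big1 ?unitr1 // => j _; rewrite mxE hS2.
by apply/is_trig_mxP => a b hab; rewrite mxE; apply: hS1.
Qed.

(* Blocks are 0-based: i = 0..k-1 corresponds to the paper's i+1.
   m = psum s k + p, n = psum t k + q;  A_r, E_r are p x q. *)
Theorem corollary4p2 (C : numClosedFieldType) (k p q : nat) (s t : nat -> nat)
  (L0 L1 : 'M[C]_(psum s k + p, psum t k + q))
  (U Ud S : 'M[C]_(psum s k + p)) (V Vd T : 'M[C]_(psum t k + q))
  (Ud' S' : 'M[C]_(psum s k)) (Vd' T' : 'M[C]_(psum t k)) :
  unitary U -> unitary V ->
  let M0 := ctrmx U *m L0 *m V in
  let M1 := ctrmx U *m L1 *m V in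
  (* U^*(L0 + lambda L1)V = [[A~, X],[0, A_r]] + lambda [[E~, Y],[0, E_r]] *)
  dlsubmx M0 = 0 -> dlsubmx M1 = 0 ->
  (* A_r has full column rank *)
  \rank (drsubmx M0) = q ->
  (* A~ + lambda E~ block upper triangular *)
  (forall i j, (j < i)%N -> (i < k)%N ->
     getblk (ulsubmx M0) (psum s i) (psum t j) (s i) (t j) = 0 /\
     getblk (ulsubmx M1) (psum s i) (psum t j) (s i) (t j) = 0) ->
  (* zero diagonal blocks of A~ *)
  (forall i, (i < k)%N -> getblk (ulsubmx M0) (psum s i) (psum t i) (s i) (t i) = 0) ->
  (* E_(i,i) full row rank *)
  (forall i, (i < k)%N ->
     \rank (getblk (ulsubmx M1) (psum s i) (psum t i) (s i) (t i)) = s i) ->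
  (* A_(i,i+1) full column rank *)
  (forall i, (i.+1 < k)%N ->
     \rank (getblk (ulsubmx M0) (psum s i) (psum t i.+1) (s i) (t i.+1)) = t i.+1) ->
  (* U_d, V_d unitary block diagonal, identity outside the leading part *)
  unitary Ud -> unitary Vd -> blkdiag s k Ud' -> blkdiag t k Vd' ->
  Ud = block_mx Ud' 0 0 1%:M -> Vd = block_mx Vd' 0 0 1%:M ->
  let N0 := ctrmx (U *m Ud) *m L0 *m (V *m Vd) in
  let N1 := ctrmx (U *m Ud) *m L1 *m (V *m Vd) in
  (* A_(i,i+1) = [Ahat; 0], Ahat square upper triangular invertible *)
  (forall i, (i.+1 < k)%N ->
     [/\ (t i.+1 <= s i)%N,
         upper_tri (getblk (ulsubmx N0) (psum s i) (psum t i.+1) (t i.+1) (t i.+1)),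
         getblk (ulsubmx N0) (psum s i) (psum t i.+1) (t i.+1) (t i.+1) \in unitmx &
         getblk (ulsubmx N0) (psum s i + t i.+1) (psum t i.+1) (s i - t i.+1) (t i.+1) = 0]) ->
  (* E_(i,i) = [0 Ehat], Ehat square upper triangular invertible *)
  (forall i, (i < k)%N ->
     [/\ (s i <= t i)%N,
         getblk (ulsubmx N1) (psum s i) (psum t i) (s i) (t i - s i) = 0,
         upper_tri (getblk (ulsubmx N1) (psum s i) (psum t i + (t i - s i)) (s i) (s i)) &
         getblk (ulsubmx N1) (psum s i) (psum t i + (t i - s i)) (s i) (s i) \in unitmx]) ->
  (* S, T unit upper triangular, extended by identity blocks *)
  unit_upper_tri S' -> unit_upper_tri T' ->
  S = block_mx S' 0 0 1%:M -> T = block_mx T' 0 0 1%:M ->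
  let B0 := invmx S *m N0 *m T in
  let B1 := invmx S *m N1 *m T in
  (* S, T bidiagonalize the leading subpencil *)
  (forall i j, (i < k)%N -> (j < k)%N -> j != i.+1 ->
     getblk (ulsubmx B0) (psum s i) (psum t j) (s i) (t j) = 0) ->
  (forall i j, (i < k)%N -> (j < k)%N -> j != i ->
     getblk (ulsubmx B1) (psum s i) (psum t j) (s i) (t j) = 0) ->
  let Shat := U *m Ud *m S in
  let That := V *m Vd *m T in
  forall i, (i < k)%N ->
    (forall x, wongU L0 L1 i.+1 x <->
       im (Shat *m (pid_mx (psum s i.+1) : 'M_(psum s k + p, psum s i.+1))) x) /\
    (forall v, wongV L0 L1 i.+1 v <->
       im (That *m (pid_mx (psum t i.+1) : 'M_(psum t k + q, psum t i.+1))) v).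

Proof.
move=> hU hV M0 M1 hdl0 hdl1 hrk htri hdiag hE hA hUd hVd hbd hbdV eUd eVd
  N0 N1 _ _ hS' hT' eS eT B0 B1 _ _ Shat That i hi.
have hU' := mulmx1C hU; have hV' := mulmx1C hV.
have e0 : L0 = U *m M0 *m ctrmx V.
  by rewrite /M0 !mulmxA hU' mul1mx -mulmxA hV' mulmx1.
have e1 : L1 = U *m M1 *m ctrmx V.
  by rewrite /M1 !mulmxA hU' mul1mx -mulmxA hV' mulmx1.
have HD : forall (a : 'I_(psum s k + p)) (b : 'I_(psum t k + q)),
    (psum s k <= a)%N -> (b < psum t k)%N -> M0 a b = 0 /\ M1 a b = 0.
  move=> a b ha hb.
  have ha' : (a - psum s k < p)%N by rewrite ltn_subLR // ltn_ord.
  have -> : a = rshift (psum s k) (Ordinal ha') by apply/val_inj; rewrite /= subnKC.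
  have -> : b = lshift q (Ordinal hb) by apply/val_inj.
  move/matrixP: hdl0 => /(_ (Ordinal ha') (Ordinal hb)); rewrite !mxE => ->.
  by move/matrixP: hdl1 => /(_ (Ordinal ha') (Ordinal hb)); rewrite !mxE => ->.
have bnds : forall i1, (i1 < k)%N -> (psum s i1 + s i1 <= psum s k)%N.
  by move=> i1 hik; rewrite -psumS psum_mono.
have bndt : forall i1, (i1 < k)%N -> (psum t i1 + t i1 <= psum t k)%N.
  by move=> i1 hik; rewrite -psumS psum_mono.
have HE0 : forall i1 j1 (a : 'I_(psum s k + p)) (b : 'I_(psum t k + q)),
    (j1 <= i1)%N -> (i1 < k)%N -> (psum s i1 <= a < psum s i1.+1)%N ->
    (psum t j1 <= b < psum t j1.+1)%N -> M0 a b = 0.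
  move=> i1 j1 a b hji hik ha hb.
  have hz : getblk M0 (psum s i1) (psum t j1) (s i1) (t j1) = 0.
    rewrite -(@getblk_ul _ _ _ _ _ M0 _ _ _ _ (bnds _ hik) (bndt _ (leq_ltn_trans hji hik))).
    case: (ltnP j1 i1) => h; first exact: (htri i1 j1 h hik).1.
    have -> : j1 = i1 by apply/eqP; rewrite eqn_leq hji h.
    exact: hdiag.
  by apply: (getblk_at0 hz); rewrite -psumS.
have HE1 : forall i1 j1 (a : 'I_(psum s k + p)) (b : 'I_(psum t k + q)),
    (j1 < i1)%N -> (i1 < k)%N -> (psum s i1 <= a < psum s i1.+1)%N ->
    (psum t j1 <= b < psum t j1.+1)%N -> M1 a b = 0.
  move=> i1 j1 a b hji hik ha hb.
  have hz : getblk M1 (psum s i1) (psum t j1) (s i1) (t j1) = 0.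
    rewrite -(@getblk_ul _ _ _ _ _ M1 _ _ _ _ (bnds _ hik) (bndt _ (ltn_trans hji hik))).
    exact: (htri i1 j1 hji hik).2.
  by apply: (getblk_at0 hz); rewrite -psumS.
have HRT : forall z : 'cV[C]_q,
    getblk M0 (psum s k) (psum t k) p q *m z = 0 -> z = 0.
  move=> z hz; have hf : row_full (drsubmx M0) by rewrite /row_full hrk.
  by apply: (row_full_inj hf); rewrite mulmx0 -getblk_dr.
have HR0 : forall i1 (z : 'cV[C]_(t i1.+1)), (i1.+1 < k)%N ->
    getblk M0 (psum s i1) (psum t i1.+1) (s i1) (t i1.+1) *m z = 0 -> z = 0.
  move=> i1 z hik hz.
  have := hA i1 hik; rewrite (@getblk_ul _ _ _ _ _ M0 _ _ _ _ (bnds _ (ltnW hik)) (bndt _ hik)) => hr.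
  have hf : row_full (getblk M0 (psum s i1) (psum t i1.+1) (s i1) (t i1.+1)).
    by rewrite /row_full hr.
  by apply: (row_full_inj hf); rewrite mulmx0.
have HR1 : forall l (y : 'cV[C]_(s l)), (l < k)%N ->
    exists z, getblk M1 (psum s l) (psum t l) (s l) (t l) *m z = y.
  move=> l y hl.
  have := hE l hl; rewrite (@getblk_ul _ _ _ _ _ M1 _ _ _ _ (bnds _ hl) (bndt _ hl)) => hr.
  have hf : row_free (getblk M1 (psum s l) (psum t l) (s l) (t l)).
    by rewrite /row_free hr.
  case/row_freeP: hf => B hB; exists (B *m y).
  by rewrite mulmxA hB mul1mx.
have WU := wong_main HD HE0 HE1 HRT HR0 HR1 hi.
have WV := wongV_main HD HE0 HE1 HRT HR0 HR1 hi.
have WC := wong_change hU hU' hV hV' e0 e1.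
split.
  move=> x.
  have hr : (psum s i.+1 <= psum s k + p)%N.
    by apply: leq_trans (psum_mono s hi) _; apply: leq_addr.
  have hXu : Ud *m S \in unitmx by rewrite eUd eS; apply: unit_blk; rewrite -?eUd.
  have hXp : forall a b : 'I_(psum s k + p), (b < psum s i.+1 <= a)%N -> (Ud *m S) a b = 0.
    apply: pres_mul; first by rewrite eUd; apply: blkdiag_pres.
    by rewrite eS; apply: blk_upper; case: hS'.
  have PX := presv_im hr hXu hXp.
  have -> : Shat = U *m (Ud *m S) by rewrite /Shat mulmxA.
  split.
    by move/WC/WU/PX => h; apply: (@final_im C _ (psum s i.+1) U (Ud *m S) x hU).1.
  by move/(@final_im C _ (psum s i.+1) U (Ud *m S) x hU).2/PX/WU/WC.
move=> v.
have hr : (psum t i.+1 <= psum t k + q)%N.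
  by apply: leq_trans (psum_mono t hi) _; apply: leq_addr.
have hXu : Vd *m T \in unitmx by rewrite eVd eT; apply: unit_blk; rewrite -?eVd.
have hXp : forall a b : 'I_(psum t k + q), (b < psum t i.+1 <= a)%N -> (Vd *m T) a b = 0.
  apply: pres_mul; first by rewrite eVd; apply: blkdiag_pres.
  by rewrite eT; apply: blk_upper; case: hT'.
have PX := presv_im hr hXu hXp.
have -> : That = V *m (Vd *m T) by rewrite /That mulmxA.
have WCV : wongV L0 L1 i.+1 v <-> wongV M0 M1 i.+1 (ctrmx V *m v).
  have key : ctrmx U *m (L0 *m v) = M0 *m (ctrmx V *m v).
    by rewrite e0 !mulmxA hU mul1mx.
  rewrite /wongV /preimg /=; split.
    by move/WC; rewrite key.
  by move=> h; apply/WC; rewrite key.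
split.
  by move/WCV/WV/PX => h; apply: (@final_im C _ (psum t i.+1) V (Vd *m T) v hV).1.
by move/(@final_im C _ (psum t i.+1) V (Vd *m T) v hV).2/PX/WV/WCV.
Qed.
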